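(* Let $U$ be a finite word over the alphabet $\{\mathtt{a},\mathtt{b},\mathtt{x}\}$ starting and ending with the letter $\mathtt{x}$, and let $\alpha=r(U)^{1/(|U|+5)}$. Then there exists a constant $c>0$ such that $f_4(n)\geqslant c\,\alpha^n$ for all $n\in\mathbb{N}$.
   Context: A square is a finite non-empty word of the form $XX$; a word is square-free if it has no square factor. A square reduction replaces a word $UXXV$ (with $X$ non-empty) by $UXV$. A reduct of $W$ is any square-free word obtainable from $W$ by a finite sequence of square reductions, and $r(W)$ is the number of distinct reducts of $W$. $|U|$ is the length of $U$. For integers $k,n\geqslant 1$, $f_k(n)$ is the maximum of $r(W)$ over all words $W$ of length $n$ over a $k$-letter alphabet. *)

(* Defs.v *)
From Stdlib Require Import Relations.
From mathcomp Require Import all_boot.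
From mathcomp Require Import boolp.

Set Implicit Arguments.
Unset Strict Implicit.
Unset Printing Implicit Defensive.

Section Words.
Variable T : eqType.

Definition squarefree (w : seq T) : Prop :=
  forall u x v : seq T, w = u ++ x ++ x ++ v -> x = [::].

Definition sq_step (w w' : seq T) : Prop :=
  exists u x v : seq T, x <> [::] /\ w = u ++ x ++ x ++ v /\ w' = u ++ x ++ v.

Definition is_reduct (W V : seq T) : Prop :=
  clos_refl_trans (seq T) sq_step W V /\ squarefree V.
End Words.

Definition words_upto (k m : nat) : seq (seq 'I_k) :=
  flatten [seq [seq tval t | t <- enum {: n.-tuple 'I_k}] | n <- iota 0 m.+1].

(* r(W): the number of distinct reducts of W.  Every reduct of W has length
   at most |W|, so counting among the words of length <= |W| counts all of
   them. *)
Definition r (k : nat) (W : seq 'I_k) : nat :=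
  count (fun V => `[< is_reduct W V >]) (words_upto k (size W)).

Definition f_k (k n : nat) : nat := \max_(W : n.-tuple 'I_k) r (tval W).

(* Main.v *)
Require Import Defs.
From Stdlib Require Import Reals.
From mathcomp Require Import all_boot.
From mathcomp Require Import zify boolp.
From Stdlib Require Import Relations Lia Lra Classical.

Fixpoint tmf (f n : nat) : bool :=
  if f is f'.+1 then (if n is 0 then false else xorb (odd n) (tmf f' n./2)) else false.

Lemma tmf_fuel f1 f2 n : n <= f1 -> n <= f2 -> tmf f1 n = tmf f2 n.
Proof.
elim: f1 f2 n => [|f1 IH] [|f2] [|n] //=.
move=> h1 h2; congr (xorb _ _); apply: IH; rewrite ?uphalfE -divn2; lia.
Qed.

Definition tm n := tmf n n.

Lemma tm_rec n : 0 < n -> tm n = xorb (odd n) (tm n./2).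
Proof.
case: n => [//|n] _; rewrite /tm /=; congr (xorb _ _); apply: tmf_fuel => //.
rewrite ?uphalfE -divn2; lia.
Qed.

Lemma tmE m : tm (2 * m) = tm m.
Proof.
case: m => [//|m]; rewrite tm_rec; last lia.
rewrite (_ : (2 * m.+1)./2 = m.+1); last by rewrite -divn2; lia.
by rewrite oddM.
Qed.

Lemma tmO m : tm (2 * m + 1) = ~~ tm m.
Proof.
rewrite tm_rec; last lia.
rewrite (_ : (2 * m + 1)./2 = m); last by rewrite -divn2; lia.
by rewrite oddD oddM.
Qed.

Lemma even_half n : ~~ odd n -> n = 2 * n./2.
Proof. by move=> /negbTE on; rewrite -{1}(odd_double_half n) on -mul2n. Qed.

Lemma odd_half n : odd n -> n = 2 * n./2 + 1.
Proof. by move=> on; rewrite -{1}(odd_double_half n) on -mul2n addnC. Qed.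

Arguments even_half {n}.
Arguments odd_half {n}.

Lemma tm_adj_odd n : tm n = tm n.+1 -> odd n.
Proof.
case/boolP: (odd n) => // /negbTE on.
have En := even_half (negbT on).
rewrite En (_ : (2 * n./2).+1 = 2 * n./2 + 1) ?tmO ?tmE; last by lia.
by case: (tm _).
Qed.

Arguments tm_adj_odd {n}.

Lemma tm_no3 k : tm k = tm k.+1 -> tm k.+1 = tm k.+2 -> False.
Proof.
move=> /tm_adj_odd o1 /tm_adj_odd o2; by move: o2; rewrite /= o1.
Qed.

Lemma tm_overlap_free p : 0 < p -> forall i, ~ (forall j, j <= p -> tm (i + j) = tm (i + j + p)).
Proof.
elim: p {-2}p (leqnn p) => [|m IH] p hp p0 i H; first by lia.
case/boolP: (odd p) => op.
-
  case: (eqVneq p 1) => [p1|pn1].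
    apply: (@tm_no3 i).
    + by have := H 0 (leq0n _); rewrite p1 addn0 addn1.
    + by have := H 1 p0; rewrite p1 !addn1.
  have p3 : 3 <= p by have := odd_half op; move: pn1 p0 => /eqP; lia.
  have A : forall j, j < 2 * p -> tm (i + j) != tm (i + j).+1.
    move=> j hj.
    have [j0 [hj0 E1 E2]] : exists j0, [/\ j0 < p, tm (i + j) = tm (i + j0) & tm (i + j).+1 = tm (i + j0).+1].
      case: (ltnP j p) => hjp; first by exists j.
      exists (j - p); split; first lia.
      + rewrite (H (j - p) _); last lia. by congr tm; lia.
      + have E := H (j - p).+1 ltac:(lia).
        rewrite (_ : (i + (j - p)).+1 = i + (j - p).+1); last lia.
        rewrite E; congr tm; lia.
    rewrite E1 E2; apply/negP => /eqP e.
    have o1 := tm_adj_odd e.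
    have e2 : tm (i + j0 + p) = tm (i + j0 + p).+1.
      rewrite -(H j0) ?(ltnW hj0) // e.
      have := H j0.+1 hj0; rewrite addnS => ->; congr tm; lia.
    have o2 := tm_adj_odd e2.
    by move: o2; rewrite oddD o1 op.
  pose k := if odd i then i else i.+1.
  have ok : odd k by rewrite /k; case: (boolP (odd i)) => //= ->.
  have Ek := odd_half ok.
  have A1 := A (k - i) ltac:(rewrite /k; case: (odd i); lia).
  have A2 := A (k - i + 2) ltac:(rewrite /k; case: (odd i); lia).
  have ki : i + (k - i) = k by rewrite /k; case: (odd i); lia.
  rewrite ki in A1; rewrite addnA ki in A2.
  apply: (@tm_no3 k./2).
  + move: A1; rewrite {1}Ek tmO (_ : k.+1 = 2 * (k./2).+1); last lia.
    by rewrite tmE; case: (tm _); case: (tm _).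
  + move: A2; rewrite (_ : k + 2 = 2 * (k./2).+1 + 1); last lia.
    rewrite (_ : (2 * (k./2).+1 + 1).+1 = 2 * (k./2).+2); last lia.
    by rewrite tmO tmE; case: (tm _); case: (tm _).
-
  have Ep := even_half op.
  have q0 : 0 < p./2 by move: p0; rewrite {1}Ep; lia.
  apply: (IH p./2 _ q0 i./2); first by rewrite -divn2; lia.
  move=> j hj.
  case/boolP: (odd i) => oi.
  + have Ei := odd_half oi.
    have := H (2 * j) ltac:(lia).
    rewrite (_ : i + 2 * j + p = 2 * (i./2 + j + p./2) + 1); last lia.
    rewrite (_ : i + 2 * j = 2 * (i./2 + j) + 1); last lia.
    by rewrite !tmO => /negb_inj.
  + have Ei := even_half oi.
    have := H (2 * j) ltac:(lia).
    rewrite (_ : i + 2 * j + p = 2 * (i./2 + j + p./2)); last lia.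
    rewrite (_ : i + 2 * j = 2 * (i./2 + j)); last lia.
    by rewrite !tmE.
Qed.

Definition dd n : nat := if tm n == tm n.+1 then 1 else if tm n.+1 then 2 else 0.

Lemma dd_lt3 n : dd n < 3.
Proof. by rewrite /dd; case: (_ == _); case: (tm _). Qed.

Lemma dd_next a b : dd a = dd b -> (tm a = tm b -> tm a.+1 = tm b.+1)
  /\ (tm a != tm b -> tm a.+1 != tm b.+1 /\ tm a.+1 = tm a).
Proof.
rewrite /dd; case: (tm a); case: (tm b); case: (tm a.+1); case: (tm b.+1) => //=.
Qed.

Arguments dd_next {a b}.

Lemma dd_sqf i p : 0 < p -> ~ (forall j, j < p -> dd (i + j) = dd (i + j + p)).
Proof.
move=> p0 H.
case: (boolP (tm i == tm (i + p))) => [/eqP e|ne].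
- suff HH : forall j, j <= p -> tm (i + j) = tm (i + j + p) by exact: (@tm_overlap_free p p0 i HH).
  elim=> [|j IH] hj; first by rewrite !addn0.
  have [h _] := dd_next (H j hj).
  rewrite (_ : (i + j.+1 + p) = (i + j + p).+1); last lia.
  by rewrite addnS; apply: h; apply: IH; exact: ltnW.
- have K : forall j, j <= p -> tm (i + j) != tm (i + j + p) /\ tm (i + j) = tm i.
    elim=> [|j IH] hj; first by rewrite !addn0; split.
    have [ne' e'] := IH (ltnW hj).
    have [_ h] := dd_next (H j hj).
    have [h1 h2] := h ne'.
    rewrite (_ : (i + j.+1 + p) = (i + j + p).+1); last lia.
    by rewrite addnS; split => //; rewrite h2.
  have [_ e] := K p (leqnn _).
  by move: ne; rewrite e eqxx.
Qed.
Set Implicit Arguments.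
Unset Strict Implicit.
Unset Printing Implicit Defensive.

Section W.
Variable T : eqType.
Implicit Types (u v w s a p q r t A B C X Z : seq T) (y z : T) (l m : seq (seq T)).

Lemma levi (u1 v1 u2 v2 : seq T) : u1 ++ v1 = u2 ++ v2 ->
  (exists t, u2 = u1 ++ t /\ v1 = t ++ v2) \/ (exists t, u1 = u2 ++ t /\ v2 = t ++ v1).
Proof.
elim: u1 u2 => [|a u1 IH] [|b u2] /=.
- by left; exists [::].
- by move=> ->; left; exists (b :: u2).
- by move=> <-; right; exists (a :: u1).
- case=> -> /IH [[t [-> ->]]|[t [-> ->]]].
  + by left; exists t.
  + by right; exists t.
Qed.

Definition cy (y : T) (l : seq (seq T)) := flatten [seq s ++ [:: y] | s <- l].

Lemma cy_cons y s l : cy y (s :: l) = s ++ y :: cy y l.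
Proof. by rewrite /cy /= -catA. Qed.

Lemma cy_nil y : cy y [::] = [::]. Proof. by []. Qed.

Lemma yfree_split y a (a' r r' : seq T) : y \notin a -> y \notin a' ->
  a ++ y :: r = a' ++ y :: r' -> a = a' /\ r = r'.
Proof.
move=> ya ya' /levi [[t [E1 E2]]|[t [E1 E2]]].
- case: t E1 E2 => [|b t] E1 /=; first by rewrite cats0 in E1; case=> ->.
  case=> Eb _; move: ya'; by rewrite E1 mem_cat -Eb inE eqxx orbT.
- case: t E1 E2 => [|b t] E1 /=; first by rewrite cats0 in E1; case=> ->.
  case=> Eb _; move: ya; by rewrite E1 mem_cat -Eb inE eqxx orbT.
Qed.

Lemma parse_y y l p q : all (fun s => y \notin s) l -> cy y l = p ++ y :: q ->
  exists l1 s l2, l = l1 ++ s :: l2 /\ p = cy y l1 ++ s /\ q = cy y l2.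
Proof.
elim: l p => [|s0 l IH] p /=; first by case: p.
case/andP=> ys0 yl; rewrite cy_cons => /levi [[t [E1 E2]]|[t [E1 E2]]].
- case: t E1 E2 => [|b t] E1 /=.
  + case=> <-; exists [::], s0, l; by rewrite E1 cats0.
  + case=> Eb; subst b => /IH [//|l1 [s [l2 [El [Et Eq]]]]].
    exists (s0 :: l1), s, l2; by rewrite E1 Et El Eq cy_cons -catA.
- case: t E1 E2 => [|b t] E1 /=.
  + case=> ->; exists [::], s0, l; by rewrite E1 cats0.
  + case=> Eb _; move: ys0; by rewrite E1 mem_cat -Eb inE eqxx orbT.
Qed.

Lemma cy_eq_nil y m : cy y m = [::] -> m = [::].
Proof. by case: m => // s m; rewrite cy_cons; case: s. Qed.

Lemma cy_prefix y (m1 m2 : seq (seq T)) r : all (fun s => y \notin s) m1 -> all (fun s => y \notin s) m2 ->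
  cy y m2 = cy y m1 ++ r -> exists m3, m2 = m1 ++ m3 /\ cy y m3 = r.
Proof.
elim: m1 m2 => [|a m1 IH] m2; first by move=> _ _ E; exists m2; rewrite E.
case: m2 => [|b m2] /=.
- by move=> _ _; rewrite cy_cons; case: a.
- case/andP=> ya y1 /andP [yb y2]; rewrite !cy_cons -catA /=.
  move=> E; case: (yfree_split yb ya E) => -> /(IH _ y1 y2) [m3 [-> <-]]; by exists m3.
Qed.

Lemma cy_inj y (l1 l2 : seq (seq T)) : all (fun s => y \notin s) l1 -> all (fun s => y \notin s) l2 ->
  cy y l1 = cy y l2 -> l1 = l2.
Proof.
move=> h1 h2 E; have E2 : cy y l2 = cy y l1 ++ [::] by rewrite cats0 E.
have [m3 [-> /cy_eq_nil ->]] := cy_prefix h1 h2 E2.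
by rewrite cats0.
Qed.

Lemma cy_rcons y m : m <> [::] -> exists z : seq T, cy y m = rcons z y.
Proof.
elim: m => // s m IH _; rewrite cy_cons; case: m IH => [|s' m] IH.
- by exists s; rewrite cats1.
- have [//|z ->] := IH; by exists (s ++ y :: z); rewrite rcons_cat.
Qed.

Lemma suffix_cy y u t l : t <> [::] -> cy y l = u ++ t -> y \in t.
Proof.
move=> tn E; have ln : l <> [::] by move=> ln; move: E; rewrite ln; case: u; case: t tn.
have [z Ez] := cy_rcons y ln; move: E; rewrite Ez.
case/lastP: t tn => // t c _; rewrite -rcons_cat => /rcons_inj [_ ->].
by rewrite mem_rcons inE eqxx.
Qed.

Lemma factor_cy y l u Z v : all (fun s => y \notin s) l -> Z <> [::] -> y \notin Z ->
  cy y l = u ++ Z ++ v -> exists s, s \in l /\ exists u' v', s = u' ++ Z ++ v'.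
Proof.
elim: l u => [|s0 l IH] u /=; first by move=> _ Zn _; case: u; case: Z Zn.
case/andP=> ys0 yl Zn yZ; rewrite cy_cons => /levi [[t [E1 E2]]|[t [E1 E2]]].
- case: t E1 E2 => [|b t] E1 /=.
  + clear IH; case: Z Zn yZ => // c Z _ yZ; rewrite cat_cons; case=> Ec; by rewrite Ec inE eqxx in yZ.
  + case=> Eb /(IH _ yl Zn yZ) [s [sl Hs]]; exists s; by rewrite inE sl orbT.
- exists s0; split; first by rewrite inE eqxx.
  move: E2 => /levi [[t2 [E3 E4]]|[t2 [E3 E4]]].
  + exists u, t2; by rewrite E1 E3.
  + case: t2 E3 E4 => [|b t2] E3 /=.
    * exists u, [::]; by rewrite E1 E3 !cats0.
    * case=> Eb _; by rewrite E3 mem_cat -Eb inE eqxx orbT in yZ.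
Qed.

Lemma sqf_factor w u Z v : squarefree w -> w = u ++ Z ++ v -> squarefree Z.
Proof.
move=> H E u' X v' EZ; apply: (H (u ++ u') X (v' ++ v)); by rewrite E EZ -!catA.
Qed.

Lemma split_first y X : y \in X -> exists A B, X = A ++ y :: B /\ y \notin A.
Proof.
elim: X => // a X IH; rewrite inE; case: (eqVneq y a) => [<- _|ya /= /IH [A [B [-> yA]]]].
- by exists [::], X.
- exists (a :: A), B; by rewrite /= inE negb_or ya yA.
Qed.

Lemma last_cat_ne (z : T) t A : A <> [::] -> last z (t ++ A) = last z A.
Proof. by case: A => // a A _; rewrite last_cat. Qed.

Lemma head_cat_ne (z : T) C t : C <> [::] -> head z (C ++ t) = head z C.
Proof. by case: C. Qed.

Lemma join_sqf y l : all (fun s => y \notin s) l ->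
  (forall s, s \in l -> [/\ s <> [::], head y s = last y s & squarefree s]) ->
  squarefree (map (head y) l) -> squarefree (cy y l).
Proof.
move=> yl Hl Hh u X v E.
case: (boolP (y \in X)) => yX; last first.
  case: (eqVneq X [::]) => [X0|/eqP Xne]; first exact: X0.
  have Zn : X ++ X <> [::] by case: X Xne yX {E}.
  have yZ : y \notin X ++ X by rewrite mem_cat negb_or yX.
  have E2 : cy y l = u ++ (X ++ X) ++ v by rewrite E !catA.
  have [s [sl [u' [v' Es]]]] := factor_cy yl Zn yZ E2.
  have [_ _ sq] := Hl s sl; apply: (sq u' X v'); by rewrite Es -catA.
exfalso.
have [A [B [EX yA]]] := split_first yX.
move: E; rewrite EX.
have -> : u ++ (A ++ y :: B) ++ (A ++ y :: B) ++ v = (u ++ A) ++ y :: ((B ++ A) ++ y :: (B ++ v))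
  by rewrite -!catA /= -?catA.
case/(parse_y yl) => l1 [s [l2 [El [E1 E2]]]].
have yl2 : all (fun s => y \notin s) l2 by move: yl; rewrite El all_cat /= => /and3P [].
have sl : s \in l by rewrite El mem_cat inE eqxx orbT.
have [t Es] : exists t, s = t ++ A.
  move: E1 => /levi [[t [E3 E4]]|[t [E3 E4]]]; last by exists t.
  case: (eqVneq t [::]) => [tn|/eqP tn]; first by exists [::]; rewrite E4 tn.
  exfalso; move: yA; by rewrite E4 mem_cat (suffix_cy tn E3).
move: E2 => /esym /(parse_y yl2) [m1 [s' [m2 [El2 [E3 E4]]]]].
have s'l : s' \in l by rewrite El El2 mem_cat inE mem_cat inE eqxx !orbT.
have [C [EB Es']] : exists C, B = cy y m1 ++ C /\ s' = C ++ A.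
  move: E3 => /levi [[t' [E5 E6]]|[t' [E5 E6]]]; last by exists t'.
  case: (eqVneq t' [::]) => [tn|/eqP tn].
    exists [::]; by rewrite E5 E6 tn !cats0.
  exfalso; move: yA; by rewrite E6 mem_cat (suffix_cy tn E5).
have ym1 : all (fun s => y \notin s) m1 by move: yl2; rewrite El2 all_cat => /andP [].
have ym2 : all (fun s => y \notin s) m2 by move: yl2; rewrite El2 all_cat /= => /and3P [].
move: E4; rewrite EB -catA => /esym /(cy_prefix ym1 ym2) [m3 [Em2 Em3]].
pose h := head y.
have Ehl : map h l = map h l1 ++ h s :: map h m1 ++ h s' :: map h m1 ++ map h m3.
  by rewrite El El2 Em2; do 3! (rewrite map_cat /=).
case: (eqVneq A [::]) => [An|/eqP An].
-
  have [s'n _ _] := Hl s' s'l.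
  have ys' : y \notin s' := allP yl s' s'l.
  have Es'C : s' = C by rewrite Es' An cats0.
  have Cn : C <> [::] by rewrite -Es'C.
  have [s'' [m4 [Em3' Hh2]]] : exists s'' m4, m3 = s'' :: m4 /\ h s'' = h s'.
    case: m3 Em2 Em3 Ehl => [|s'' m4] Em2 Em3 Ehl.
      by exfalso; move: Cn; have := congr1 size Em3; rewrite cy_nil size_cat; case: (C).
    exists s'', m4; split => //.
    move: Em3; rewrite cy_cons => /levi [[t' [E7 E8]]|[t' [E7 E8]]].
    + case: t' E7 E8 => [|b t'] E7 /=.
      * by rewrite /h Es'C E7 cats0.
      * case=> Eb _; exfalso; move: ys'; by rewrite Es'C E7 mem_cat -Eb inE eqxx orbT.
    + by rewrite /h E7 Es'C head_cat_ne.
  rewrite Em3' in Ehl.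
  suff : map h m1 ++ [:: h s'] = [::] by case: (map h m1).
  apply: (Hh (map h l1 ++ [:: h s]) _ (map h m4)).
  by rewrite Ehl /= Hh2 -!catA /= -?catA.
-
  have [_ hs _] := Hl s sl.
  have [_ hs' _] := Hl s' s'l.
  have Hh2 : h s = h s' by rewrite /h hs hs' Es Es' !last_cat_ne.
  suff : h s :: map h m1 = [::] by [].
  apply: (Hh (map h l1) _ (map h m3)).
  by rewrite Ehl Hh2 /= -?catA.
Qed.

End W.
Section R.
Variable T : eqType.
Implicit Types (u v w s p q X : seq T) (y z : T).
Notation crt := (clos_refl_trans (seq T) (@sq_step T)).

Lemma step_ctx p q w w' : sq_step w w' -> sq_step (p ++ w ++ q) (p ++ w' ++ q).
Proof.
case=> u [X [v [Xn [-> ->]]]]; exists (p ++ u), X, (v ++ q); split => //.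
by rewrite -!catA.
Qed.

Lemma crt_ctx p q w w' : crt w w' -> crt (p ++ w ++ q) (p ++ w' ++ q).
Proof.
elim=> [a b st|a|a b c _ IH1 _ IH2].
- by apply: rt_step; apply: step_ctx.
- exact: rt_refl.
- exact: rt_trans IH1 IH2.
Qed.

Lemma crt_cy_cons y a a' l l' : crt a a' -> crt (cy y l) (cy y l') ->
  crt (cy y (a :: l)) (cy y (a' :: l')).
Proof.
move=> H1 H2; rewrite !cy_cons; apply: (@rt_trans _ _ _ (a' ++ y :: cy y l)).
- by have := crt_ctx [::] (y :: cy y l) H1; rewrite /=.
- have := crt_ctx (a' ++ [:: y]) [::] H2; by rewrite !cats0 -!catA.
Qed.

Lemma crt_size w w' : crt w w' -> size w' <= size w.
Proof.
elim=> [a b [u [X [v [_ [-> ->]]]]]|a|a b c _ IH1 _ IH2].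
- by rewrite !size_cat; lia.
- by [].
- exact: leq_trans IH2 IH1.
Qed.

Lemma crt_headlast z w w' : crt w w' -> w <> [::] ->
  [/\ w' <> [::], head z w' = head z w & last z w' = last z w].
Proof.
elim=> [a b [u [X [v [Xn [-> ->]]]]]|a|a b c _ IH1 _ IH2] //.
- move=> _; case: X Xn => // x0 X _; split.
  + by case: u.
  + by case: u.
  + by rewrite !last_cat.
- move=> an; have [bn h1 l1] := IH1 an; have [cn h2 l2] := IH2 bn.
  by split => //; rewrite ?h2 ?h1 ?l2 ?l1.
Qed.

Lemma crt_map (T' : eqType) (f : T -> T') w w' : crt w w' ->
  clos_refl_trans (seq T') (@sq_step T') (map f w) (map f w').
Proof.
elim=> [a b [u [X [v [Xn [-> ->]]]]]|a|a b c _ IH1 _ IH2].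
- apply: rt_step; exists (map f u), (map f X), (map f v); split.
  + by case: X Xn.
  + by rewrite !map_cat.
- exact: rt_refl.
- exact: rt_trans IH1 IH2.
Qed.

Lemma sqf_map (T' : eqType) (f : T -> T') w : injective f -> squarefree w -> squarefree (map f w).
Proof.
move=> fi H u X v E.
pose a := size u; pose b := size X.
have Eu : map f (take a w) = u by rewrite map_take E take_size_cat.
have EX1 : map f (take b (drop a w)) = X by rewrite map_take map_drop E drop_size_cat // take_size_cat.
have EX2 : map f (take b (drop (a + b) w)) = X.
  by rewrite map_take map_drop E catA drop_size_cat ?size_cat // take_size_cat.
have Ev : map f (drop (a + b + b) w) = v.
  by rewrite map_drop E catA catA drop_size_cat // !size_cat.
have E12 : take b (drop a w) = take b (drop (a + b) w) by apply: (inj_map fi); rewrite EX1 EX2.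
have Hw : w = take a w ++ take b (drop a w) ++ take b (drop (a + b) w) ++ drop (a + b + b) w.
  by apply: (inj_map fi); rewrite !map_cat Eu EX1 EX2 Ev E.
rewrite E12 in Hw; have := H _ _ _ Hw => X0; by rewrite -EX2 X0.
Qed.

Lemma reduct_exists w : exists w', crt w w' /\ squarefree w'.
Proof.
move: {2}(size w) (leqnn (size w)) => n; elim: n w => [|n IH] w.
- rewrite leqn0 => /nilP ->; exists [::]; split; first exact: rt_refl.
  by move=> u X v; case: u; case: X.
- move=> Hs; case: (classic (squarefree w)) => sq.
    by exists w; split => //; exact: rt_refl.
  have [u [X [v [E Xn]]]] : exists u X v, w = u ++ X ++ X ++ v /\ X <> [::].
    apply: NNPP => Hn; apply: sq => u X v E; apply: NNPP => Xn; apply: Hn; by exists u, X, v.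
  have st : sq_step w (u ++ X ++ v) by exists u, X, v.
  have Hsz : size (u ++ X ++ v) <= n.
    move: Hs; rewrite E !size_cat; case: X Xn {E st} => // x0 X _ /=; lia.
  have [w' [H1 H2]] := IH _ Hsz.
  exists w'; split => //; exact: rt_trans (rt_step _ _ _ _ st) H1.
Qed.

Lemma crt_pad y p j : crt (p ++ y :: nseq j y) (p ++ [:: y]).
Proof.
elim: j => [|j IH]; first exact: rt_refl.
apply: rt_trans IH; apply: rt_step; exists p, [:: y], (nseq j y); split => //.
Qed.

End R.
Section Choices.
Variable T : eqType.
Variables (y : T) (s : nat) (lt : nat -> T) (U4 : seq T) (R4 : seq (seq T)).
Notation crt := (clos_refl_trans (seq T) (@sq_step T)).

Fixpoint choices (l : seq nat) : seq (seq (seq T)) :=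
  if l is z :: l' then
    (if z == s then [seq V :: rest | V <- R4, rest <- choices l']
     else [seq [:: lt z] :: rest | rest <- choices l'])
  else [:: [::]].

Definition base (l : seq nat) := [seq (if z == s then U4 else [:: lt z]) | z <- l].

Lemma size_choices l : size (choices l) = size R4 ^ count (pred1 s) l.
Proof.
elim: l => //= z l IH; case Ez: (z == s).
- rewrite size_allpairs IH; by rewrite /= ?add1n ?expnS.
- by rewrite size_map IH.
Qed.

Lemma uniq_choices l : uniq R4 -> uniq (choices l).
Proof.
move=> uR; elim: l => //= z l IH; case: (z == s).
- apply: allpairs_uniq => //; by move=> [a b] [c d] _ _ /= [-> ->].
- rewrite map_inj_uniq //; by move=> a b [].
Qed.

Lemma sqf_single (c : T) : squarefree [:: c].
Proof.
move=> u X v /(congr1 size); rewrite !size_cat /=; case: X => //= ? ?; lia.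
Qed.

Hypothesis HR : forall V, V \in R4 ->
  [/\ y \notin V, V <> [::], head y V = lt s, last y V = lt s & squarefree V] /\ crt U4 V.
Hypothesis Hlt : forall z, lt z != y.

Lemma choices_prop l L : L \in choices l ->
  [/\ map (head y) L = map lt l,
      (forall seg, seg \in L -> [/\ seg <> [::], head y seg = last y seg & squarefree seg]),
      all (fun seg => y \notin seg) L &
      crt (cy y (base l)) (cy y L)].
Proof.
elim: l L => [|z l IH] L /=.
  rewrite inE => /eqP ->; split => //; exact: rt_refl.
case: (eqVneq z s) => [Ez|ne].
- case/allpairsP => [[V rest] [/= VR rl ->]].
  have [[yV Vn hV lV sV] cV] := HR VR.
  have [h1 h2 h3 h4] := IH _ rl.
  split.
  + by rewrite /= hV h1 ?Ez.
  + move=> seg; rewrite inE => /orP [/eqP ->|]; last exact: h2.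
    by split => //; rewrite hV lV.
  + by rewrite /= yV h3.
  + by rewrite ?Ez ?eqxx; apply: crt_cy_cons.
- case/mapP => rest rl ->.
  have [h1 h2 h3 h4] := IH _ rl.
  split.
  + by rewrite /= h1.
  + move=> seg; rewrite inE => /orP [/eqP ->|]; last exact: h2.
    split => //; exact: sqf_single.
  + by rewrite /= inE eq_sym (negbTE (Hlt z)) h3.
  + rewrite ?(negbTE ne); apply: crt_cy_cons => //; exact: rt_refl.
Qed.



End Choices.

Lemma count_ge (X : eqType) (p : pred X) (s L : seq X) : uniq L ->
  (forall z, z \in L -> z \in s /\ p z) -> size L <= count p s.
Proof.
move=> uL H; rewrite -size_filter; apply: uniq_leq_size => // z zL.
have [zs pz] := H z zL; by rewrite mem_filter pz zs.
Qed.

Lemma mem_words_upto k m (w : seq 'I_k) : size w <= m -> w \in words_upto k m.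
Proof.
move=> hw; rewrite /words_upto; apply/flattenP.
exists [seq tval t | t <- enum {: (size w).-tuple 'I_k}].
- apply/mapP; exists (size w) => //; by rewrite mem_iota add0n ltnS.
- apply/mapP; exists (in_tuple w) => //; by rewrite mem_enum.
Qed.

Lemma uniq_flatten_sizes (X : eqType) (F : nat -> seq (seq X)) s : uniq s ->
  (forall n, uniq (F n)) -> (forall n w, w \in F n -> size w = n) ->
  uniq (flatten (map F s)).
Proof.
move=> us uF sF; elim: s us => //= a s IH /andP [as_ us].
rewrite cat_uniq uF IH // andbT; apply/hasPn => w /flattenP [ws /mapP [n ns ->] wF].
apply/negP => wa; move: as_; by rewrite -(sF _ _ wa) (sF _ _ wF) ns.
Qed.

Lemma uniq_words_upto k m : uniq (words_upto k m).
Proof.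
apply: uniq_flatten_sizes; first exact: iota_uniq.
- move=> n; rewrite map_inj_uniq ?enum_uniq //; exact: val_inj.
- by move=> n w /mapP [t _ ->]; rewrite size_tuple.
Qed.

Lemma r_ge1 k (W : seq 'I_k) : 1 <= r W.
Proof.
have [w' [H1 H2]] := reduct_exists W.
rewrite /r; apply: (@count_ge _ _ _ [:: w']) => // z; rewrite inE => /eqP ->; split.
- apply: mem_words_upto; exact: crt_size H1.
- by apply/asboolP.
Qed.

Lemma f_ge k n (W : n.-tuple 'I_k) : r (tval W) <= f_k k n.
Proof. rewrite /f_k; exact: (@leq_bigmax _ (fun W : n.-tuple 'I_k => r (tval W)) W). Qed.

Section Main.
Variables (x : 'I_3) (U : seq 'I_3).
Hypotheses (hU : U <> [::]) (hhead : head x U = x) (hlast : last x U = x).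

Definition e3 : 'I_3 -> 'I_4 := widen_ord (leqnSn 3).
Lemma e3_inj : injective e3.
Proof. by move=> a b /(congr1 val) /= /val_inj. Qed.
Definition y4 : 'I_4 := ord_max.
Lemma e3_neq z : e3 z != y4.
Proof. by rewrite -(inj_eq val_inj) /= neq_ltn ltn_ord. Qed.
Lemma y_notin_map V : y4 \notin map e3 V.
Proof. by apply/mapP => [[z _ E]]; have := e3_neq z; rewrite -E eqxx. Qed.

Definition phi (s z : nat) : 'I_3 := Ordinal (ltn_pmod (z + (3 - s) + x) (isT : 0 < 3)).
Lemma phi_s s : s < 3 -> phi s s = x.
Proof. move=> hs; apply: val_inj => /=; have := ltn_ord x; lia. Qed.
Lemma phi_inj s a b : a < 3 -> b < 3 -> phi s a = phi s b -> a = b.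
Proof. move=> ha hb /(congr1 val) /=; have := ltn_ord x; lia. Qed.

Definition lt4 s z := e3 (phi s z).
Definition R3 := filter (fun V => `[< is_reduct U V >]) (words_upto 3 (size U)).
Definition R4 := map (map e3) R3.
Definition U4 := map e3 U.

Lemma size_R4 : size R4 = r U.
Proof. by rewrite size_map size_filter. Qed.

Lemma uniq_R4 : uniq R4.
Proof. rewrite map_inj_uniq; [exact/filter_uniq/uniq_words_upto | exact/inj_map/e3_inj]. Qed.

Lemma HR4 s : s < 3 -> forall V, V \in R4 ->
  [/\ y4 \notin V, V <> [::], head y4 V = lt4 s s, last y4 V = lt4 s s & squarefree V]
  /\ clos_refl_trans _ (@sq_step _) U4 V.
Proof.
move=> hs _ /mapP [V VR ->]; move: VR; rewrite mem_filter => /andP [/asboolP [H1 H2] _].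
have [Vn hV lV] := crt_headlast x H1 hU.
rewrite hhead in hV; rewrite hlast in lV.
split; last exact: crt_map.
rewrite /lt4 phi_s //; split.
- exact: y_notin_map.
- by case: V Vn {H1 H2 hV lV}.
- by case: V Vn {H1 H2 lV} hV => // v V _ /= ->.
- case: V Vn {H1 H2 hV} lV => // v V _ /= <-; by rewrite last_map.
- exact: sqf_map e3_inj H2.
Qed.

End Main.

Definition cnt z N := count (pred1 z) (map dd (iota 0 N)).
Lemma cnt_S z N : cnt z N.+1 = cnt z N + (dd N == z).
Proof. by rewrite /cnt -addn1 iotaD map_cat count_cat /= addn0. Qed.
Lemma cnt_sum N : cnt 0 N + cnt 1 N + cnt 2 N = N.
Proof.
elim: N => // N IH; rewrite !cnt_S; have := dd_lt3 N.
case: (dd N) => [|[|[|k]]] //= _; lia.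
Qed.
Definition vmax N := maxn (cnt 0 N) (maxn (cnt 1 N) (cnt 2 N)).
Lemma vmax_step N : vmax N <= vmax N.+1 <= vmax N + 1.
Proof.
rewrite /vmax !cnt_S; have := dd_lt3 N.
case: (dd N) => [|[|[|k]]] //= _; lia.
Qed.

Section Main2.
Variables (x : 'I_3) (U : seq 'I_3).
Hypotheses (hU : U <> [::]) (hhead : head x U = x) (hlast : last x U = x).

Definition g N := 2 * N + (size U - 1) * vmax N.

Lemma g_step N : g N + 2 <= g N.+1 <= g N + size U + 1.
Proof.
have /andP [hv1 hv2] := vmax_step N.
have L1 : 0 < size U by case: U hU.
have h1 : (size U - 1) * vmax N <= (size U - 1) * vmax N.+1 := leq_mul (leqnn _) hv1.
have h2 : (size U - 1) * vmax N.+1 <= (size U - 1) * (vmax N + 1) := leq_mul (leqnn _) hv2.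
rewrite mulnDr muln1 in h2; rewrite /g; lia.
Qed.

Lemma pickN n : exists N, g N <= n < g N.+1.
Proof.
elim: n => [|n [N /andP [h1 h2]]].
- exists 0; have := g_step 0; rewrite /g /vmax /cnt /=; lia.
- case: (leqP (g N.+1) n.+1) => h3.
  + exists N.+1; have := g_step N.+1; lia.
  + exists N; lia.
Qed.

Lemma size_cy_base s l :
  size (cy y4 (base s (lt4 x s) (U4 U) l)) = 2 * size l + (size U - 1) * count (pred1 s) l.
Proof.
have L1 : 0 < size U by case: U hU.
elim: l => [|z l IH]; first by rewrite /= ?muln0.
rewrite [base _ _ _ (_ :: _)]/= cy_cons size_cat /= IH.
case: (z == s) => /=; rewrite ?size_map; nia.
Qed.

Lemma heads_sqf s N : squarefree (map (lt4 x s) (map dd (iota 0 N))).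
Proof.
move=> u X v E; case: (eqVneq X [::]) => [//|/eqP Xn]; exfalso.
have p0 : 0 < size X by case: X Xn {E}.
apply: (@dd_sqf (size u) (size X) p0) => j hj.
have hs : size u + size X + size X + size v = N.
  by have := congr1 size E; rewrite !size_map size_iota !size_cat; lia.
have nthw : forall k, k < N -> nth y4 (map (lt4 x s) (map dd (iota 0 N))) k = lt4 x s (dd k).
  move=> k hk; rewrite -map_comp (nth_map 0); last by rewrite size_iota.
  by rewrite nth_iota.
have n1 : nth y4 (u ++ X ++ X ++ v) (size u + j) = nth y4 X j.
  by rewrite nth_cat ltnNge leq_addr /= addKn nth_cat hj.
have n2 : nth y4 (u ++ X ++ X ++ v) (size u + j + size X) = nth y4 X j.
  rewrite nth_cat ltnNge (_ : size u <= size u + j + size X) /=; last lia.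
  rewrite (_ : size u + j + size X - size u = size X + j); last lia.
  by rewrite nth_cat ltnNge leq_addr /= addKn nth_cat hj.
move: n1 n2; rewrite -E !nthw; try lia.
move=> h1 h2; apply: (@phi_inj x s _ _ (dd_lt3 _) (dd_lt3 _)); apply: e3_inj; exact: etrans h1 (esym h2).
Qed.

End Main2.

Section Main3.
Variables (x : 'I_3) (U : seq 'I_3).
Hypotheses (hU : U <> [::]) (hhead : head x U = x) (hlast : last x U = x).

Lemma main_count n : exists v, n < (size U + 5) * v.+1 /\ r U ^ v <= f_k 4 n.
Proof.
have L1 : 0 < size U by case: U hU.
have [N /andP [h1 h2]] := pickN hU n.
pose v := vmax N.
pose s := if cnt 0 N == v then 0 else if cnt 1 N == v then 1 else 2.
have hs : s < 3 by rewrite /s; case: (cnt 0 N == v); case: (cnt 1 N == v).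
have cs : cnt s N = v.
  rewrite /s; case: (eqVneq (cnt 0 N) v) => [->//|n0]; case: (eqVneq (cnt 1 N) v) => [->//|n1]; move: n0 n1; rewrite /v /vmax; lia.
have Nv : N <= 3 * v.
  have := cnt_sum N; rewrite /v /vmax; lia.
have gs := g_step hU N.
exists v; split.
  move: h2 gs; rewrite /g -/v; nia.
case: (posnP v) => [v0|vpos].
  rewrite v0; exact: leq_trans (r_ge1 _) (f_ge (nseq_tuple n y4)).
pose l := map dd (iota 0 N).
have Npos : 0 < N by have := cnt_sum N; move: vpos; rewrite /v /vmax; lia.
pose W0 := cy y4 (base s (lt4 x s) (U4 U) l).
have sW0 : size W0 = g U N.
  by rewrite /W0 size_cy_base // /l size_map size_iota /g -/v -cs.
pose W := W0 ++ nseq (n - g U N) y4.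
have sW : size W == n by rewrite /W size_cat sW0 size_nseq; apply/eqP; lia.
have HR := HR4 hU hhead hlast hs.
have Hlt : forall z, lt4 x s z != y4 by move=> z; exact: e3_neq.
have padW : clos_refl_trans _ (@sq_step _) W W0.
  have ln : base s (lt4 x s) (U4 U) l <> [::].
    move/(congr1 size); rewrite /base size_map /l size_map size_iota /=; lia.
  have [z Ez] := cy_rcons y4 ln.
  rewrite /W /W0 Ez -cats1 -catA /=; exact: crt_pad.
apply: leq_trans (f_ge (Tuple sW)).
have cl : count (pred1 s) l = v by rewrite -cs.
rewrite -size_R4 -cl -(size_choices s (lt4 x s) (R4 U) l) -(size_map (cy y4)) /=.
apply: count_ge.
- rewrite map_inj_in_uniq; first exact: uniq_choices (uniq_R4 U).
  move=> L1' L2' /(choices_prop HR Hlt) [_ _ a1 _] /(choices_prop HR Hlt) [_ _ a2 _].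
  exact: cy_inj.
- move=> z /mapP [Lc Lcin ->].
  have [hh hseg hall hcrt] := choices_prop HR Hlt Lcin.
  have cW : clos_refl_trans _ (@sq_step _) W (cy y4 Lc) := rt_trans _ _ _ _ _ padW hcrt.
  split.
  + apply: mem_words_upto; exact: crt_size cW.
  + apply/asboolP; split => //.
    apply: join_sqf => //; rewrite hh; exact: heads_sqf.
Qed.

End Main3.

Lemma natpowE (a b : nat) : Nat.pow a b = expn a b.
Proof. elim: b => // b IH; by rewrite expnS -IH. Qed.

Open Scope R_scope.

(* Alphabet {a,b,x} is 'I_3, with x : 'I_3 the distinguished letter. *)
Theorem theorem2p9 (x : 'I_3) (U : seq 'I_3)
  (hU : U <> [::]) (hhead : head x U = x) (hlast : last x U = x) :
  let alpha := Rpower (INR (Defs.r U)) (/ INR (size U + 5)%nat) in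
  exists c : R, 0 < c /\ forall n : nat, c * alpha ^ n <= INR (f_k 4 n).
Proof.
move=> alpha.
have r1 := r_ge1 U.
have rr1 : 1 <= INR (r U) by apply: (le_INR 1); apply/leP.
have K0 : 0 < INR (size U + 5) by apply: lt_0_INR; apply/ltP; by rewrite addnS.
have apos : 0 < alpha by rewrite /alpha /Rpower; apply: exp_pos.
exists (/ INR (r U)); split; first by apply: Rinv_0_lt_compat; lra.
move=> n; have [v [Hn Hf]] := main_count hU hhead hlast n.
have Hn' : INR n < INR (size U + 5) * INR v.+1.
  rewrite -mult_INR; apply: lt_INR; apply/ltP; exact: Hn.
have Hle : / INR (size U + 5) * INR n <= INR v.+1.
  apply: (Rmult_le_reg_l (INR (size U + 5))) => //.
  rewrite -Rmult_assoc Rinv_r; lra.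
have E1 : alpha ^ n = Rpower (INR (r U)) (/ INR (size U + 5) * INR n).
  by rewrite -Rpower_pow // /alpha Rpower_mult.
rewrite E1.
have E2 := Rle_Rpower _ _ _ rr1 Hle.
rewrite Rpower_pow in E2; last lra.
apply: (Rle_trans _ (/ INR (r U) * INR (r U) ^ v.+1)).
  apply: Rmult_le_compat_l => //; apply: Rlt_le; apply: Rinv_0_lt_compat; lra.
rewrite /= -Rmult_assoc Rinv_l ?Rmult_1_l; last lra.
rewrite -pow_INR; apply: le_INR; apply/leP; rewrite natpowE; exact: Hf.
Qed.
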